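(* Let $n\ge 1$ be an integer, and suppose that $A,B,C\subseteq\mathbb{Z}_5^n$ satisfy $(A+B)\cap C=\emptyset$, where $A+B=\{a+b:a\in A,b\in B\}$. If $\min\{|A|,|B|\}>2\cdot5^{n-1}$ and $C\ne\emptyset$, then $|A|+|B|+2|C|\le 6\cdot5^{n-1}$.
   Context: $\mathbb{Z}_5^n$ denotes the elementary abelian $5$-group of rank $n$. *)

(* Defs.v *)
From mathcomp Require Import all_boot all_algebra.
Set Implicit Arguments. Unset Strict Implicit. Unset Printing Implicit Defensive.
Import GRing.Theory.
Local Open Scope ring_scope.

Definition Z5n (n : nat) := 'rV['Z_5]_n.

Definition sumset (n : nat) (A B : {set Z5n n}) : {set Z5n n} :=
  [set a + b | a in A, b in B].

(* Main.v *)
Require Import Defs.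
From mathcomp Require Import all_boot all_algebra.
From mathcomp Require Import zify.

Set Implicit Arguments. Unset Strict Implicit. Unset Printing Implicit Defensive.
Import GRing.Theory.

Section Iso.
Variable V : finZmodType.
Local Open Scope ring_scope.
Implicit Types (X Y Z W K : {set V}) (g y z : V).

Definition ssum (X Z : {set V}) : {set V} := [set x + z | x in X, z in Z].
Definition tr (X : {set V}) (g : V) : {set V} := [set x + g | x in X].
Definition neg (Y : {set V}) : {set V} := [set - y | y in Y].

Lemma mem_tr X g y : (y \in tr X g) = (y - g \in X).
Proof.
apply/imsetP/idP => [[x xX ->]|h]; first by rewrite addrK.
by exists (y - g) => //; rewrite subrK.
Qed.

Lemma card_tr X g : #|tr X g| = #|X|.
Proof. by apply: card_imset; apply: (can_inj (addrK g)). Qed.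

Lemma mem_neg Y y : (y \in neg Y) = (- y \in Y).
Proof.
apply/imsetP/idP => [[x xX ->]|h]; first by rewrite opprK.
by exists (- y) => //; rewrite opprK.
Qed.

Lemma card_neg Y : #|neg Y| = #|Y|.
Proof. by apply: card_imset; apply: oppr_inj. Qed.

Lemma negK Y : neg (neg Y) = Y.
Proof. by apply/setP => y; rewrite !mem_neg opprK. Qed.

Lemma ssumS X (X' : {set V}) Z : X \subset X' -> ssum X Z \subset ssum X' Z.
Proof.
move=> sXX'; apply/subsetP => y /imset2P [x z xX zZ ->].
by apply/imset2P; exists x z => //; apply: (subsetP sXX').
Qed.

Lemma card_ssum_l X Z z : z \in Z -> (#|X| <= #|ssum X Z|)%N.
Proof.
move=> zZ; rewrite -(card_tr X z); apply: subset_leq_card.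
apply/subsetP => y /imsetP [x xX ->]; by apply/imset2P; exists x z.
Qed.

Lemma card_ssum_r X Z x : x \in X -> (#|Z| <= #|ssum X Z|)%N.
Proof.
move=> xX; have <- : #|[set x + z | z in Z]| = #|Z|.
  by apply: card_imset; apply: addrI.
apply: subset_leq_card.
apply/subsetP => y /imsetP [z zZ ->]; by apply/imset2P; exists x z.
Qed.

Lemma card_ssum_tr X Z g : #|ssum (tr X g) Z| = #|ssum X Z|.
Proof.
rewrite -(card_tr (ssum X Z) g); apply: esym; apply: eq_card => y.
rewrite mem_tr; apply/imset2P/imset2P => [[x z xX zZ hy]|[x z]].
  exists (x + g) z => //; first by rewrite mem_tr addrK.
  by rewrite addrAC -hy subrK.
rewrite mem_tr => xX zZ ->; exists (x - g) z => //.
by rewrite addrAC.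
Qed.

Lemma submod X (X' : {set V}) Z :
  (#|ssum (X :&: X') Z| + #|ssum (X :|: X') Z| <= #|ssum X Z| + #|ssum X' Z|)%N.
Proof.
rewrite -(cardsUI (ssum X Z) (ssum X' Z)) /ssum imset2Ul addnC leq_add2l.
apply: subset_leq_card; rewrite subsetI.
by rewrite (ssumS _ (subsetIl X X')) (ssumS _ (subsetIr X X')).
Qed.

Lemma stable_dvd (K W : {set V}) :
  0 \in K -> {in K &, forall a b, a - b \in K} ->
  {in W & K, forall w k, w + k \in W} -> (#|K| %| #|W|)%N.
Proof.
move=> K0 KB.
elim: {W}(#|W|).+1 {-2}W (ltnSn #|W|) => // m IH W hWm hW.
case: (set_0Vmem W) => [-> | [w wW]]; first by rewrite cards0 dvdn0.
pose Q := tr K w.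
have QW : Q \subset W.
  apply/subsetP => y; rewrite mem_tr => hy.
  by have := hW w (y - w) wW hy; rewrite addrC subrK.
have cQ : #|Q| = #|K| by rewrite card_tr.
have hK0 : (0 < #|K|)%N by rewrite card_gt0; apply/set0Pn; exists 0.
have e : #|W| = (#|Q| + #|W :\: Q|)%N.
  by rewrite -(cardsID Q W) (setIidPr QW).
have hW' : {in W :\: Q & K, forall w k, w + k \in W :\: Q}.
  move=> v k; rewrite !inE => /andP [vQ vW] kK.
  rewrite hW // andbT; apply: contra vQ; rewrite !mem_tr => h.
  have := KB _ _ h kK; by rewrite addrAC addrK.
have := IH (W :\: Q) _ hW'; rewrite e cQ dvdn_addr ?dvdnn //.
apply; move: hWm; rewrite e cQ; lia.
Qed.

Lemma lexle (a x b y M : nat) : (x < M)%N -> (y < M)%N ->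
  (a * M + x <= b * M + y)%N -> (a <= b)%N /\ (b = a -> x <= y)%N.
Proof.
move=> hx hy h; split; last by move=> e; rewrite e leq_add2l in h.
rewrite leqNgt; apply/negP => hba.
have : (b.+1 * M <= a * M)%N by rewrite leq_mul2r hba orbT.
rewrite mulSn; lia.
Qed.

Definition cs (A : {set V}) : nat := #|A|.
Definition cV : nat := #|V|.

Lemma kappa (N : nat)
  (hV : forall d, (d %| #|V|)%N -> (d < #|V|)%N -> (d %| N)%N)
  (Y : {set V}) : (2 * N < #|Y|)%N ->
  forall X0, (0 < #|X0|)%N -> (#|ssum X0 Y| < #|V|)%N ->
  (2 * N + #|X0| <= #|ssum X0 Y|)%N.
Proof.
move=> hY0 X0 hX00 hX0V0.
have hY : (2 * N < cs Y)%N by [].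
have hX0 : (0 < cs X0)%N by [].
have hX0V : (cs (ssum X0 Y) < cV)%N by [].
suff : (2 * N + cs X0 <= cs (ssum X0 Y))%N by [].
rewrite leqNgt; apply/negP => hlt.
have [y1 y1Y] : exists y1, y1 \in Y.
  by apply/set0Pn; rewrite -card_gt0; move: hY; rewrite /cs; lia.
have hX0Y : (cs X0 <= cs (ssum X0 Y))%N := card_ssum_l X0 y1Y.
pose Zs (s : bool) := if s then Y else neg Y.
have cZ s : cs (Zs s) = cs Y by case: s => //=; rewrite /cs card_neg.
have ZsN s : Zs (~~ s) = neg (Zs s) by case: s => //=; rewrite negK.
pose P (p : bool * {set V}) := (0 < cs p.2)%N && (cs (ssum p.2 (Zs p.1)) < cV)%N.
pose cost (p : bool * {set V}) := (cs (ssum p.2 (Zs p.1)) - cs p.2)%N.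
pose M := cV.+1.
pose m p := (cost p * M + cs p.2)%N.
have P0 : P (true, X0) by rewrite /P /= hX0 hX0V.
case: (arg_minnP m P0) => [[s X] PX minX].
have hmin : forall q, P q -> (cost (s, X) <= cost q)%N /\
     (cost q = cost (s, X) -> cs X <= cs q.2)%N.
  move=> q Pq; apply: (@lexle _ _ _ _ M); rewrite ?ltnS ?max_card //.
  exact: minX.
move: PX; rewrite /P /= => /andP [hX hXV].
set Z := Zs s in hXV.
have hZ : (2 * N < cs Z)%N by rewrite /Z cZ.
have [z zZ] : exists z, z \in Z.
  by apply/set0Pn; rewrite -card_gt0; move: hZ; rewrite /cs; lia.
have hXZ : (cs X <= cs (ssum X Z))%N := card_ssum_l X zZ.
have [k ek] : exists k, cost (s, X) = k by eexists.
have e1 : cs (ssum X Z) = (cs X + k)%N by rewrite -ek /cost /= -/Z subnKC.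
have hmin1 : forall q, P q -> (k <= cost q)%N by move=> q /hmin []; rewrite ek.
have hmin2 : forall q, P q -> cost q = k -> (cs X <= cs q.2)%N.
  by move=> q /hmin [] _; rewrite ek.
have hk : (k < 2 * N)%N.
  have := hmin1 _ P0; rewrite /cost /=; lia.
have hsmall : (2 * cs X + k <= cV)%N.
  pose Xs := ~: ssum X Z.
  have sub : ssum Xs (neg Z) \subset ~: X.
    apply/subsetP => y /imset2P [x' z' hx' hz' ->].
    rewrite inE; apply/negP => hyX.
    move: hx'; rewrite inE => /negP; apply; apply/imset2P.
    exists (x' + z') (- z') => //; first by rewrite -mem_neg.
    by rewrite addrK.
  have c1 : (cs (ssum X Z) + cs Xs = cV)%N by rewrite /cs cardsC.
  have c2 : (cs X + cs (~: X) = cV)%N by rewrite /cs cardsC.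
  have c3 : (cs (ssum Xs (neg Z)) <= cs (~: X))%N by apply: subset_leq_card.
  have Pq : P (~~ s, Xs).
    by rewrite /P /= ZsN -/Z; apply/andP; split; lia.
  have h1 := hmin1 _ Pq.
  have h3 : cost (~~ s, Xs) = k.
    apply/eqP; rewrite eqn_leq h1 andbT.
    by rewrite /cost /= ZsN -/Z; lia.
  have := hmin2 _ Pq h3; rewrite /=; lia.
have hstab : forall g, (exists2 y, y \in X & y - g \in X) ->
    forall y, (y - g \in X) = (y \in X).
  move=> g [y0 y0X y0g].
  pose X' := tr X g.
  have cX' : cs X' = cs X by rewrite /cs card_tr.
  have cX'Z : cs (ssum X' Z) = cs (ssum X Z) by rewrite /cs card_ssum_tr.
  have hs : (cs (ssum (X :&: X') Z) + cs (ssum (X :|: X') Z) <=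
             cs (ssum X Z) + cs (ssum X' Z))%N := submod X X' Z.
  have hUI : (cs (X :|: X') + cs (X :&: X') = cs X + cs X')%N by rewrite /cs cardsUI.
  have hI : (0 < cs (X :&: X'))%N.
    by rewrite /cs card_gt0; apply/set0Pn; exists y0; rewrite inE y0X mem_tr.
  have hIZ : (cs (ssum (X :&: X') Z) <= cs (ssum X Z))%N.
    by apply: subset_leq_card; apply: ssumS; apply: subsetIl.
  have hXU : (cs X <= cs (X :|: X'))%N by apply: subset_leq_card; apply: subsetUl.
  have hU : (cs (X :|: X') + k <= cs (ssum (X :|: X') Z))%N.
    have hUU : (cs (X :|: X') <= cs (ssum (X :|: X') Z))%N := card_ssum_l _ zZ.
    case: (ltnP (cs (ssum (X :|: X') Z)) cV) => h.
      have PU : P (s, X :|: X').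
        by rewrite /P /= -/Z h andbT; lia.
      have := hmin1 _ PU; rewrite /cost /= -/Z; lia.
    lia.
  have PI : P (s, X :&: X') by rewrite /P /= -/Z hI /=; lia.
  have h1 := hmin1 _ PI.
  have h3 : cost (s, X :&: X') = k.
    apply/eqP; rewrite eqn_leq h1 andbT /cost /= -/Z; lia.
  have h4 := hmin2 _ PI h3; rewrite /= in h4.
  have eI : X :&: X' = X.
    by apply/eqP; rewrite eqEcard subsetIl h4.
  have eX : X = X'.
    apply/eqP; rewrite eqEcard -/(cs X) -/(cs X') cX' leqnn andbT.
    by rewrite -eI subsetIr.
  by move=> y; rewrite -mem_tr -/X' -eX.
(* the atom is a subgroup *)
have [x0 x0X] : exists x0, x0 \in X by apply/set0Pn; rewrite -card_gt0.
pose K := tr X (- x0).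
have memK y : (y \in K) = (y + x0 \in X) by rewrite mem_tr opprK.
have hK : forall k', k' \in K -> forall y, (y + k' \in X) = (y \in X).
  move=> k' kK y; have := hstab (- k'); rewrite opprK; apply.
  by exists x0 => //; rewrite addrC -memK.
have K0 : 0 \in K by rewrite memK add0r.
have KB : {in K &, forall a b, a - b \in K}.
  move=> a b aK bK; rewrite memK -(hK b bK) addrAC subrK -memK //.
have cK : cs K = cs X by rewrite /cs card_tr.
have dV : (cs X %| N)%N.
  apply: hV; last by rewrite -/(cs X) -/cV; lia.
  rewrite -/(cs X) -cK /cs -cardsT; apply: stable_dvd => // w k' _ _; exact: in_setT.
have dW : (cs X %| cs (ssum X Z))%N.
  rewrite -cK /cs -(card_tr (ssum X Z) (- x0)); apply: stable_dvd => //.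
  move=> w k' wW kK; move: wW; rewrite !mem_tr !opprK => /imset2P [x z' xX zZ' hw].
  apply/imset2P; exists (x + k') z' => //; first by rewrite hK.
  by rewrite addrAC hw addrAC.
have hZ' : (cs Z <= cs (ssum X Z))%N := card_ssum_r Z x0X.
move: dW; rewrite e1 dvdn_addr ?dvdnn // => dk.
case/dvdnP: dk => q hq; case/dvdnP: dV => r hr.
have hk3 : (2 * N < cs X + k)%N by lia.
move: hk3 hk; rewrite hq hr mulnA -mulSn ltn_pmul2r // => a1.
rewrite ltn_pmul2r // => a2.
lia.
Qed.

End Iso.

Theorem lemma2 (n : nat) (A B C : {set Z5n n}) :
  (1 <= n)%N ->
  sumset A B :&: C = set0 ->
  (2 * 5 ^ n.-1 < minn #|A| #|B|)%N ->
  C != set0 ->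
  (#|A| + #|B| + 2 * #|C| <= 6 * 5 ^ n.-1)%N.
Proof.
move=> hn hABC hmin hC.
rewrite leq_min in hmin; case/andP: hmin => hA hB.
set N := (5 ^ n.-1)%N in hA hB *.
pose V : finZmodType := 'rV['Z_5]_n.
have cardV : #|V| = (5 * N)%N.
  rewrite card_mx card_ord mul1n -expnS prednK //.
have hdiv : forall d, (d %| #|V|)%N -> (d < #|V|)%N -> (d %| N)%N.
  move=> d; rewrite cardV /N -expnS prednK //.
  case/(dvdn_pfactor _ _ (isT : prime 5)) => j hj -> hlt.
  rewrite dvdn_exp2l //; rewrite ltn_exp2l // in hlt.
  by rewrite -ltnS prednK.
have inS a b : a \in A -> b \in B -> (a + b)%R \in C -> False.
  move=> aA bB abC.
  have : (a + b)%R \in sumset A B :&: C.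
    by rewrite inE abC andbT; apply/imset2P; exists a b.
  by rewrite hABC inE.
have subB : ssum C (neg B) \subset ~: A.
  apply/subsetP => y /imset2P [c b' cC hb' ->]; rewrite inE; apply/negP => hy.
  rewrite mem_neg in hb'; apply: (inS _ _ hy hb'); by rewrite addrK.
have subA : ssum C (neg A) \subset ~: B.
  apply/subsetP => y /imset2P [c a' cC ha' ->]; rewrite inE; apply/negP => hy.
  rewrite mem_neg in ha'; apply: (inS _ _ ha' hy); by rewrite addrC addrK.
have hC0 : (0 < cs C)%N by rewrite /cs card_gt0.
have hA' : (2 * N < cs A)%N by [].
have hB' : (2 * N < cs B)%N by [].
have c1 : (cs A + cs (~: A) = @cV V)%N by rewrite /cs cardsC.
have c2 : (cs B + cs (~: B) = @cV V)%N by rewrite /cs cardsC.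
have s1 : (cs (ssum C (neg B)) <= cs (~: A))%N by apply: subset_leq_card.
have s2 : (cs (ssum C (neg A)) <= cs (~: B))%N by apply: subset_leq_card.
have k1 : (2 * N + cs C <= cs (ssum C (neg B)))%N.
  apply: (@kappa V N hdiv); first by rewrite card_neg.
    exact: hC0.
  change (cs (ssum C (neg B)) < @cV V)%N; lia.
have k2 : (2 * N + cs C <= cs (ssum C (neg A)))%N.
  apply: (@kappa V N hdiv); first by rewrite card_neg.
    exact: hC0.
  change (cs (ssum C (neg A)) < @cV V)%N; lia.
have cV5 : @cV V = (5 * N)%N by rewrite /cV cardV.
change (cs A + cs B + 2 * cs C <= 6 * N)%N.
lia.
Qed.
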